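(* Let $\mathcal E$ be an exchangeability system for a noncommutative probability space $(\mathcal A,\phi)$ and let $(X_i)_{i=1}^n$ and $(Y_i)_{i=1}^n$ be $\mathcal E$-independent families in $\mathcal A$. Then $K_n(X_1+Y_1,\dots,X_n+Y_n)=K_n(X_1,\dots,X_n)+K_n(Y_1,\dots,Y_n)$.
   Context: A noncommutative probability space is a pair $(\mathcal A,\phi)$ of a complex unital algebra $\mathcal A$ and a unital linear functional $\phi$. An exchangeability system $\mathcal E$ for $(\mathcal A,\phi)$ consists of a noncommutative probability space $(\mathcal U,\tilde\phi)$ and a family $(\iota_k)_{k\in\mathbb N}$ of embeddings (injective unital algebra homomorphisms) $\iota_k:\mathcal A\to\mathcal A_k\subseteq\mathcal U$ with $\tilde\phi\circ\iota_k=\phi$; write $X^{(k)}=\iota_k(X)$. It is required that for all $X_1,\dots,X_n\in\mathcal A$, all indices $i_1,\dots,i_n\in\mathbb N$ and every bijection $\sigma$ of $\mathbb N$, $\tilde\phi(X_1^{(i_1)}\cdots X_n^{(i_n)})=\tilde\phi(X_1^{(\sigma(i_1))}\cdots X_n^{(\sigma(i_n))})$; this value depends only on the kernel of $j\mapsto i_j$ (partition of $[n]$ into level sets) and for a partition $\pi$ of $[n]$ it is denoted $\phi_\pi(X_1,\dots,X_n)$. For a primitive $n$-th root of unity $\omega$ put $X_j^\omega=\sum_{k=1}^n\omega^kX_j^{(k)}$ and $K_n(X_1,\dots,X_n)=\frac1n\tilde\phi(X_1^\omega\cdots X_n^\omega)$. Subalgebras $\mathcal B,\mathcal C\subseteq\mathcal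 A$ are $\mathcal E$-independent if for all $X_1,\dots,X_n\in\mathcal B\cup\mathcal C$ and every decomposition $[n]=I\sqcup J$ with $X_i\in\mathcal B$ for $i\in I$, $X_i\in\mathcal C$ for $i\in J$, one has $\phi_\pi(X_1,\dots,X_n)=\phi_{\pi'}(X_1,\dots,X_n)$ whenever $\pi|_I=\pi'|_I$ and $\pi|_J=\pi'|_J$. Two families are $\mathcal E$-independent if the subalgebras they generate are. *)

(* Defs.v *)
From HB Require Import structures.
From mathcomp Require Import all_boot all_order all_algebra.
From mathcomp Require Import algC.
Set Implicit Arguments. Unset Strict Implicit. Unset Printing Implicit Defensive.
Import Order.TTheory GRing.Theory Num.Theory.
Local Open Scope ring_scope.

Definition ncps (A : algType algC) (phi : A -> algC) : Prop :=
  [/\ forall x y : A, phi (x + y) = phi x + phi y,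
      forall (c : algC) (x : A), phi (c *: x) = c * phi x
    & phi 1 = 1].

Definition embedding (A U : algType algC) (f : A -> U) : Prop :=
  [/\ forall x y : A, f (x + y) = f x + f y,
      forall (c : algC) (x : A), f (c *: x) = c *: f x,
      forall x y : A, f (x * y) = f x * f y,
      f 1 = 1
    & injective f].

Definition mixed_moment (A U : algType algC) (phit : U -> algC)
  (iota : nat -> A -> U) (n : nat) (X : 'I_n -> A) (i : 'I_n -> nat) : algC :=
  phit (\prod_(j < n) iota (i j) (X j)).

Record exch_system (A : algType algC) (phi : A -> algC) := ExchSystem {
  es_U : algType algC;
  es_phit : es_U -> algC;
  es_iota : nat -> A -> es_U;
  es_ncps : ncps es_phit;
  es_emb : forall k, embedding (es_iota k);
  es_restr : forall k (x : A), es_phit (es_iota k x) = phi x;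
  es_exch : forall (n : nat) (X : 'I_n -> A) (i : 'I_n -> nat)
              (sigma : nat -> nat), bijective sigma ->
      mixed_moment es_phit es_iota X i
      = mixed_moment es_phit es_iota X (fun j => sigma (i j))
}.
Arguments es_U {A phi}.
Arguments es_phit {A phi}.
Arguments es_iota {A phi}.

Definition same_ker_on (n : nat) (I : {set 'I_n}) (i i' : 'I_n -> nat) : Prop :=
  forall j k : 'I_n, j \in I -> k \in I -> (i j == i k) = (i' j == i' k).

(* phi_pi(X_1..X_n) = phit(X_1^(i_1)...X_n^(i_n)) for any i with ker i = pi;
   E-independence of B and C, written on index tuples. *)
Definition E_independent (A : algType algC) (phi : A -> algC)
  (E : exch_system phi) (B C : A -> Prop) : Prop :=
  forall (n : nat) (X : 'I_n -> A) (I : {set 'I_n}),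
    (forall j, j \in I -> B (X j)) ->
    (forall j, j \notin I -> C (X j)) ->
    forall i i' : 'I_n -> nat,
      same_ker_on I i i' -> same_ker_on (~: I) i i' ->
      mixed_moment (es_phit E) (es_iota E) X i
      = mixed_moment (es_phit E) (es_iota E) X i'.

Definition gen_alg (A : algType algC) (S : A -> Prop) (x : A) : Prop :=
  forall P : A -> Prop,
    (forall s, S s -> P s) -> P 1 ->
    (forall a b, P a -> P b -> P (a + b)) ->
    (forall (c : algC) a, P a -> P (c *: a)) ->
    (forall a b, P a -> P b -> P (a * b)) -> P x.

Definition fam_range (A : Type) (n : nat) (X : 'I_n -> A) (x : A) : Prop :=
  exists j, X j = x.

Definition fam_E_independent (A : algType algC) (phi : A -> algC)
  (E : exch_system phi) (n m : nat) (X : 'I_n -> A) (Y : 'I_m -> A) : Prop :=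
  E_independent E (gen_alg (fam_range X)) (gen_alg (fam_range Y)).

Definition omega_lift (A : algType algC) (phi : A -> algC) (E : exch_system phi)
  (n : nat) (w : algC) (x : A) : es_U E :=
  \sum_(1 <= k < n.+1) (w ^+ k) *: es_iota E k x.

Definition Kn (A : algType algC) (phi : A -> algC) (E : exch_system phi)
  (n : nat) (w : algC) (X : 'I_n -> A) : algC :=
  n%:R^-1 * es_phit E (\prod_(j < n) omega_lift E n w (X j)).

(* Main.v *)
Require Import Defs.
From HB Require Import structures.
From mathcomp Require Import all_boot all_order all_algebra.
From mathcomp Require Import algC.
Import GRing.Theory.
Local Open Scope ring_scope.

Lemma phit_sum (A : algType algC) (phi : A -> algC) (E : exch_system phi)
  (I : finType) (P : pred I) (F : I -> es_U E) :
  es_phit E (\sum_(i | P i) F i) = \sum_(i | P i) es_phit E (F i).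
Proof.
have [Hd Hs H1] := es_ncps E.
have H0 : es_phit E 0 = 0.
  by apply: (addrI (es_phit E 0)); rewrite -Hd !addr0.
by apply: (big_morph _ Hd H0).
Qed.

Lemma omega_liftD (A : algType algC) (phi : A -> algC) (E : exch_system phi)
  n w (x y : A) : omega_lift E n w (x + y) = omega_lift E n w x + omega_lift E n w y.
Proof.
rewrite /omega_lift -big_split /=; apply: eq_bigr => k _.
have [Hd _ _ _ _] := es_emb E k.
by rewrite Hd scalerDr.
Qed.

Lemma T_expand (A : algType algC) (phi : A -> algC) (E : exch_system phi)
  n w (Z : 'I_n -> A) :
  es_phit E (\prod_(j < n) omega_lift E n w (Z j)) =
  \sum_(g : {ffun 'I_n -> 'I_n}) (\prod_(j < n) w ^+ (g j).+1) *
     mixed_moment (es_phit E) (es_iota E) Z (fun j => (g j).+1).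
Proof.
have [Hd Hs H1] := es_ncps E.
have -> : \prod_(j < n) omega_lift E n w (Z j) =
   \prod_(j < n) \sum_(k < n) w ^+ k.+1 *: es_iota E k.+1 (Z j).
  by apply: eq_bigr => j _; rewrite /omega_lift big_add1 /= big_mkord.
rewrite bigA_distr_bigA phit_sum; apply: eq_bigr => g _.
by rewrite scaler_prod Hs.
Qed.

Definition hI {n} (I : {set 'I_n}) (g : {ffun 'I_n -> 'I_n}) : {ffun 'I_n -> 'I_n} :=
  [ffun j => if j \in I then ordS (g j) else g j].

Lemma hI_inj n I : injective (@hI n I).
Proof.
move=> g1 g2 /ffunP H; apply/ffunP => j; have := H j; rewrite !ffunE.
by case: (j \in I) => // /ordS_inj.
Qed.

Lemma T_zero (A : algType algC) (phi : A -> algC) (E : exch_system phi)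
  n (w : algC) (Hw : n.-primitive_root w) (Z : 'I_n -> A) (I : {set 'I_n})
  (HI0 : (0 < #|I|)%N) (HIn : (#|I| < n)%N)
  (Hmom : forall g, mixed_moment (es_phit E) (es_iota E) Z (fun j => (hI I g j).+1)
     = mixed_moment (es_phit E) (es_iota E) Z (fun j => (g j).+1)) :
  es_phit E (\prod_(j < n) omega_lift E n w (Z j)) = 0.
Proof.
rewrite T_expand.
set S := \sum_(g : {ffun 'I_n -> 'I_n}) _.
have HS : S = w ^+ #|I| * S.
  rewrite {1}/S (reindex_inj (@hI_inj n I)) /= mulr_sumr.
  apply: eq_bigr => g _; rewrite Hmom mulrA; congr (_ * _).
  rewrite (bigID (mem I)) /= [X in _ = _ * X](bigID (mem I)) /= mulrA.
  congr (_ * _); last first.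
    by apply: eq_bigr => j /negbTE Hj; rewrite ffunE Hj.
  rewrite -prodr_const -big_split /=; apply: eq_bigr => j Hj.
  rewrite ffunE Hj /= -exprS.
  apply/eqP; rewrite (eq_prim_root_expr Hw).
  by rewrite -(addn1 ((g j).+1 %% n)) -(addn1 (g j).+1) modnDml.
have Hc : w ^+ #|I| != 1.
  rewrite -(expr0 w) (eq_prim_root_expr Hw) mod0n modn_small //.
  by rewrite -lt0n.
have : (1 - w ^+ #|I|) * S = 0 by rewrite mulrBl mul1r -HS subrr.
by move/eqP; rewrite mulf_eq0 subr_eq0 eq_sym (negbTE Hc) /= => /eqP.
Qed.

Theorem corollary2p3 (A : algType algC) (phi : A -> algC)
  (Hphi : ncps phi) (E : exch_system phi) (n : nat) (w : algC)
  (Hw : n.-primitive_root w) (X Y : 'I_n -> A)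
  (Hind : fam_E_independent E X Y) :
  Kn E w (fun j => X j + Y j) = Kn E w X + Kn E w Y.
Proof.
have n0 : (0 < n)%N := prim_order_gt0 Hw.
rewrite /Kn -mulrDr; congr (_ * _).
have -> : \prod_(j < n) omega_lift E n w (X j + Y j) =
   \prod_(j < n) \sum_(c : bool) (if c then omega_lift E n w (X j) else omega_lift E n w (Y j)).
  by apply: eq_bigr => j _; rewrite big_bool omega_liftD.
rewrite bigA_distr_bigA phit_sum.
have Hne : [ffun=> false] != [ffun=> true] :> {ffun 'I_n -> bool}.
  apply/eqP => /ffunP H; have := H (Ordinal n0); by rewrite !ffunE.
rewrite (bigD1 [ffun=> true]) //= (bigD1 [ffun=> false]) //=.
rewrite [X in _ + (_ + X)]big1 ?addr0; last first.
  move=> f /andP [Hf1 Hf2].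
  set I := [set j | f j].
  have -> : \prod_(i < n) (if f i then omega_lift E n w (X i) else omega_lift E n w (Y i))
     = \prod_(i < n) omega_lift E n w (if f i then X i else Y i).
    by apply: eq_bigr => i _; case: (f i).
  apply: (@T_zero _ _ E n w Hw _ I).
  - rewrite card_gt0; apply/set0Pn.
    apply/existsP; apply: contraNT Hf2 => /existsPn H; apply/eqP/ffunP => j.
    by rewrite ffunE; have := H j; rewrite inE; case: (f j).
  - rewrite -[X in (_ < X)%N]card_ord -cardsT; apply: proper_card; rewrite properT.
    apply: contra Hf1 => /eqP HT; apply/eqP/ffunP => j; rewrite ffunE.
    have Hj : j \in I by rewrite HT in_setT.
    by move: Hj; rewrite /I inE.
  - move=> g; apply: (Hind n _ I).
    + move=> j; rewrite inE => ->; by move=> P HS _ _ _ _; apply: HS; exists j.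
    + move=> j; rewrite inE => /negbTE ->; by move=> P HS _ _ _ _; apply: HS; exists j.
    + move=> j k Hj Hk; rewrite !ffunE Hj Hk !eqSS.
      by apply/eqP/eqP => [/ord_inj/ordS_inj -> | /ord_inj ->].
    + move=> j k; rewrite !in_setC => Hj Hk; by rewrite !ffunE (negbTE Hj) (negbTE Hk).
congr (es_phit E _ + es_phit E _); apply: eq_bigr => j _; by rewrite ffunE.
Qed.
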